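(* Let $\alpha>0$ and $N\ge2$. If $\mu,\nu$ are probability measures on $\Omega_N$ such that $\mu\in\mathcal{S}$ and $\mu$ is stochastically dominated by $\nu$ (i.e. $\mu(f)\le\nu(f)$ for every increasing $f$), then $$\|\mu-\pi_{N,\alpha}\|_{TV}\le\|\nu-\pi_{N,\alpha}\|_{TV}.$$
   Context: $\Omega_N=\{x\in\mathbb{R}^{N-1}:0\le x_1\le\dots\le x_{N-1}\le N\}$, $x_0=0,x_N=N$; increasing means w.r.t. coordinatewise order. For $k\in\{1,\dots,N\}$, $\Omega_{k,N}=\{x\in\Omega_N:x_k=N\}$ (so $\Omega_{1,N}=\{(N,\dots,N)\}$, $\Omega_{N,N}=\Omega_N$). $\pi_{k,\alpha}$ is the law of $(x_1,\dots,x_{N-1})$ with $x_j=\sum_{i\le j}\eta_i$, where $\eta_1,\dots,\eta_k$ are i.i.d. Gamma with shape $\alpha$ (any rate) conditioned on $\sum_{i=1}^k\eta_i=N$, and $\eta_{k+1}=\dots=\eta_N=0$; $\pi_{N,\alpha}$ is the case $k=N$ (density proportional to $\prod_{i=1}^N(x_i-x_{i-1})^{\alpha-1}$). $\mathcal{S}_k$ is the set of probability measures supported on $\Omega_{k,N}$, absolutely continuous w.r.t. $\pi_{k,\alpha}$ with increasing density. $\mathcal{S}$ is the set of probability measures $\mu=\sum_{k=1}^N\gamma_k\mu_k$ with $\mu_k\in\mathcal{S}_k$, $\gamma_k\ge0$, $\sum\gamma_k=1$. *)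

(* Defs.v *)
From HB Require Import structures.
From mathcomp Require Import all_boot all_order all_algebra.
From mathcomp Require Import all_classical all_reals all_analysis.
Unset Printing Implicit Defensive.
Import Order.TTheory GRing.Theory Num.Theory.
Import numFieldNormedType.Exports.
Local Open Scope classical_set_scope.
Local Open Scope ring_scope.

Section defs.
Variable R : realType.

(* Points of R^(N-1): (N.-1)-tuples, with the product sigma-algebra
   (MathComp-Analysis' measurable structure on tuples). *)
Definition pt (N : nat) := (N.-1).-tuple R.

(* Extended coordinates of a sequence s = (s_1,...,s_(m-1)) :
   coord m c s 0 = 0, coord m c s j = s_j for 0<j<m, coord m c s j = c for j >= m. *)
Definition coord (m : nat) (c : R) (s : seq R) (j : nat) : R :=
  if j == 0%N then 0 else if (m <= j)%N then c else nth 0 s j.-1.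

Definition OmegaN (N : nat) : set (pt N) :=
  [set x | forall j, (j < N)%N -> coord N N%:R x j <= coord N N%:R x j.+1].

Definition OmegakN (N k : nat) : set (pt N) :=
  [set x | OmegaN N x /\ coord N N%:R x k = N%:R].

Definition leT (N : nat) (x y : pt N) := forall i, tnth x i <= tnth y i.
Definition increasing_on (N : nat) (D : set (pt N)) (f : pt N -> R) :=
  forall x y, D x -> D y -> leT N x y -> f x <= f y.

Fixpoint iint (n : nat) : (n.-tuple R -> \bar R) -> \bar R :=
  match n return (n.-tuple R -> \bar R) -> \bar R with
  | 0%N => fun F => F [tuple]
  | n'.+1 => fun F =>
      (\int[@lebesgue_measure R]_t iint n' (fun y : n'.-tuple R => F [tuple of t :: y]))%E
  end.

(* Unnormalised density of pi_{k,alpha} in the free coordinates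
   y = (y_1,...,y_(k-1)), with y_0 = 0, y_k = N:
   prod_{i=1}^k (y_i - y_(i-1))^(alpha-1) on {0 <= y_1 <= ... <= y_(k-1) <= N}. *)
Definition rho (alpha : R) (N k : nat) (y : (k.-1).-tuple R) : R :=
  if `[< forall j, (j < k)%N -> coord k N%:R y j <= coord k N%:R y j.+1 >]
  then \prod_(1 <= i < k.+1) (coord k N%:R y i - coord k N%:R y i.-1) `^ (alpha - 1)
  else 0.

Definition embed (N k : nat) (y : (k.-1).-tuple R) : pt N :=
  [tuple (if (i < k.-1)%N then nth 0 (y : seq R) i else N%:R) | i < N.-1].

Definition Zk (alpha : R) (N k : nat) : \bar R :=
  iint (k.-1) (fun y : (k.-1).-tuple R => (rho alpha N k y)%:E).

Definition piInt (alpha : R) (N k : nat) (h : pt N -> \bar R) : \bar R :=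
  ((fine (Zk alpha N k))^-1)%:E *
  iint (k.-1) (fun y : (k.-1).-tuple R => (rho alpha N k y)%:E * h (embed N k y))%E.

Definition pik (alpha : R) (N k : nat) (A : set (pt N)) : \bar R :=
  piInt alpha N k (fun x => (\1_A x)%:E).

Definition piN (alpha : R) (N : nat) := pik alpha N N.

Definition inSk (alpha : R) (N k : nat) (m : set (pt N) -> \bar R) :=
  exists g : pt N -> R,
    [/\ measurable_fun setT g, (forall x, 0 <= g x),
        increasing_on N (OmegakN N k) g &
        forall A, measurable A ->
          m A = piInt alpha N k (fun x => ((g x)%:E * (\1_A x)%:E)%E)].

Definition inS (alpha : R) (N : nat) (m : set (pt N) -> \bar R) :=
  exists (gam : 'I_N -> R) (mk : 'I_N -> probability (pt N) R),
    [/\ (forall i, 0 <= gam i), \sum_(i < N) gam i = 1,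
        (forall i : 'I_N, inSk alpha N i.+1 (mk i)) &
        forall A, measurable A ->
          m A = (\sum_(i < N) (gam i)%:E * mk i A)%E].

Definition stoch_le (N : nat) (mu nu : set (pt N) -> \bar R) :=
  forall f : pt N -> R, measurable_fun setT f -> increasing_on N (OmegaN N) f ->
    (\int[mu]_(x in OmegaN N) (f x)%:E <= \int[nu]_(x in OmegaN N) (f x)%:E)%E.

Definition tv (N : nat) (mu p : set (pt N) -> \bar R) : \bar R :=
  ereal_sup [set `|(mu A - p A)%E|%E | A in [set A : set (pt N) | measurable A]].

End defs.

(* Main.v *)
Require Import Defs.
From HB Require Import structures.
From mathcomp Require Import all_boot all_order all_algebra.
From mathcomp Require Import all_classical all_reals all_analysis.
From mathcomp Require Import measurable_realfun.
From mathcomp Require Import ring lra.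
Import Order.TTheory GRing.Theory Num.Theory.
Local Open Scope classical_set_scope.
Local Open Scope ring_scope.

Section helpers.
Context {R : realType}.
Local Open Scope ereal_scope.

Lemma iint_ge0 n (F : n.-tuple R -> \bar R) : (forall y, 0 <= F y) -> 0 <= iint R n F.
Proof.
elim: n F => [|n IH] F F0 /=; first exact: F0.
by apply: integral_ge0 => t _; apply: IH.
Qed.

Lemma meas_cons1 n (F : n.+1.-tuple R -> \bar R) : measurable_fun setT F ->
  measurable_fun setT (fun p : R * n.-tuple R => F [tuple of p.1 :: p.2]).
Proof.
move=> mF; apply: (measurableT_comp mF).
exact: (measurable_cons measurable_fst measurable_snd).
Qed.

Lemma meas_cons2 n (F : n.+1.-tuple R -> \bar R) (t : R) : measurable_fun setT F ->
  measurable_fun setT (fun y : n.-tuple R => F [tuple of t :: y]).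
Proof.
move=> mF; apply: (measurableT_comp mF).
have := @measurable_cons _ _ _ _ (fun _ : n.-tuple R => t) n id (measurable_cst t) (@measurable_id _ _ setT).
by [].
Qed.

Lemma iint_meas n : forall d (T : measurableType d) (F : T -> n.-tuple R -> \bar R),
  measurable_fun setT (fun p : T * n.-tuple R => F p.1 p.2) ->
  (forall x y, 0 <= F x y) ->
  measurable_fun setT (fun x => iint R n (F x)).
Proof.
elim: n => [|n IH] d T F mF F0 /=.
  have H := measurableT_comp mF (measurable_fun_pair (@measurable_id _ _ setT) (measurable_cst ([tuple] : 0.-tuple R))).
  exact: H.
pose G := fun (p : T * R) (y : n.-tuple R) => F p.1 [tuple of p.2 :: y].
have mH : measurable_fun setT (fun p => iint R n (G p)).
  apply: IH => //=; last by move=> x y; exact: F0.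
  rewrite /G.
  have H := measurableT_comp mF (measurable_fun_pair
    (measurableT_comp (@measurable_fst _ _ T R) (@measurable_fst _ _ (T * R)%type (n.-tuple R)))
    (measurable_cons (measurableT_comp (@measurable_snd _ _ T R) (@measurable_fst _ _ (T * R)%type (n.-tuple R))) (@measurable_snd _ _ (T * R)%type (n.-tuple R)))).
  exact: H.
have := @measurable_fun_fubini_tonelli_F _ _ _ _ _ (@lebesgue_measure R)
  (fun p => iint R n (G p)) mH.
by apply => p; apply: iint_ge0 => y; exact: F0.
Qed.

Lemma iintD n (F G : n.-tuple R -> \bar R) :
  measurable_fun setT F -> measurable_fun setT G ->
  (forall y, 0 <= F y) -> (forall y, 0 <= G y) ->
  iint R n (fun y => F y + G y) = iint R n F + iint R n G.
Proof.
elim: n F G => [|n IH] F G mF mG F0 G0 //=.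
rewrite -ge0_integralD //.
- apply: eq_integral => t _.
  by rewrite IH //; [exact: meas_cons2|exact: meas_cons2].
- by move=> t _; apply: iint_ge0.
- apply: (@iint_meas n _ R (fun t y => F [tuple of t :: y]));
    [exact: meas_cons1 | by move=> ? ?; exact: F0].
- by move=> t _; apply: iint_ge0.
- apply: (@iint_meas n _ R (fun t y => G [tuple of t :: y]));
    [exact: meas_cons1 | by move=> ? ?; exact: G0].
Qed.

Lemma iint_le n (F G : n.-tuple R -> \bar R) :
  measurable_fun setT F -> measurable_fun setT G ->
  (forall y, 0 <= F y) -> (forall y, F y <= G y) ->
  iint R n F <= iint R n G.
Proof.
elim: n F G => [|n IH] F G mF mG F0 FG //=.
apply: ge0_le_integral.

- exact: measurableT.
- by move=> t _; apply: iint_ge0.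
- apply: (@iint_meas n _ R (fun t y => F [tuple of t :: y]));
    [exact: meas_cons1 | by move=> ? ?; exact: F0].
- apply: (@iint_meas n _ R (fun t y => G [tuple of t :: y]));
    [exact: meas_cons1 | by move=> ? ?; apply: le_trans (FG _); exact: F0].
- move=> t tT. apply: (IH (fun y => F [tuple of t :: y]) (fun y => G [tuple of t :: y])).
  + exact: meas_cons2.
  + exact: meas_cons2.
  + by move=> y; exact: F0.
  + by move=> y; exact: FG.
Qed.

Lemma iintZ n (F : n.-tuple R -> \bar R) (c : R) :
  measurable_fun setT F -> (forall y, 0 <= F y) -> (0 <= c)%R ->
  iint R n (fun y => c%:E * F y) = c%:E * iint R n F.
Proof.
elim: n F => [|n IH] F mF F0 c0 //=.
rewrite -ge0_integralZl //.
- apply: eq_integral => t _.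
  by rewrite IH //; exact: meas_cons2.
- apply: (@iint_meas n _ R (fun t y => F [tuple of t :: y]));
    [exact: meas_cons1 | by move=> ? ?; exact: F0].
- by move=> t _; apply: iint_ge0.
Qed.

Lemma iint0 n (F : n.-tuple R -> \bar R) : (forall y, F y = 0) -> iint R n F = 0.
Proof.
elim: n F => [|n IH] F F0 /=; first exact: F0.
rewrite (eq_integral (cst 0)) ?integral0 // => t _.
by rewrite IH.
Qed.

Lemma iintS n (F : n.+1.-tuple R -> \bar R) :
  iint R n.+1 F = \int[@lebesgue_measure R]_t iint R n (fun y => F [tuple of t :: y]).
Proof. by []. Qed.

Lemma iint_last0 n (c : R) (F : n.+1.-tuple R -> \bar R) :
  (forall y, tnth y ord_max != c -> F y = 0) -> iint R n.+1 F = 0.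
Proof.
elim: n F => [|n IH] F F0.
  rewrite iintS /=.
  rewrite (_ : (fun t => F [tuple of t :: [tuple]]) = (fun t => F [tuple of t :: [tuple]]) \_ [set c]).
    by rewrite -integral_mkcond integral_set1.
  apply/funext => t; rewrite patchE; case: ifPn => // /negP.
  rewrite inE /= => tc; apply: F0 => /=.
  by apply/eqP.
rewrite iintS (eq_integral (cst 0)) ?integral0 // => t _.
rewrite IH // => y yc; apply: F0.
have -> : (ord_max : 'I_n.+3.-1) = lift ord0 (ord_max : 'I_n.+2.-1) by apply: val_inj.
by rewrite tnthS.
Qed.


Local Close Scope ereal_scope.

Lemma meas_le_set d (T : measurableType d) (f g : T -> R) :
  measurable_fun setT f -> measurable_fun setT g -> measurable [set x | f x <= g x].
Proof.
move=> mf mg.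
have := measurable_funB mg mf measurableT (measurable_itv `[0, +oo[).
rewrite setTI; congr measurable; apply/seteqP; split => x /=;
  by rewrite in_itv /= andbT subr_ge0.
Qed.

Lemma meas_nth m i : measurable_fun setT (fun y : m.-tuple R => nth 0 (y : seq R) i).
Proof.
case: (ltnP i m) => h.
  rewrite (_ : (fun y : m.-tuple R => _) = (fun y => tnth y (Ordinal h))).
    exact: measurable_tnth.
  by apply/funext => y; rewrite (tnth_nth 0).
rewrite (_ : (fun y : m.-tuple R => _) = (fun _ => 0)); first exact: measurable_cst.
by apply/funext => y; rewrite nth_default // size_tuple.
Qed.

Lemma meas_coord k c j : measurable_fun setT (fun y : (k.-1).-tuple R => Defs.coord R k c y j).
Proof.
rewrite /Defs.coord; case: eqP => _; first exact: measurable_cst.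
case: leqP => _; first exact: measurable_cst.
exact: meas_nth.
Qed.

Lemma meas_ordset k c : measurable [set y : (k.-1).-tuple R |
  forall j, (j < k)%N -> Defs.coord R k c y j <= Defs.coord R k c y j.+1].
Proof.
rewrite (_ : [set y | _] = \bigcap_j [set y : (k.-1).-tuple R | (j < k)%N -> Defs.coord R k c y j <= Defs.coord R k c y j.+1]).
  apply: bigcapT_measurable => j; case: (ltnP j k) => hj.
    rewrite (_ : [set y | _] = [set y : (k.-1).-tuple R | Defs.coord R k c y j <= Defs.coord R k c y j.+1]).
      by apply: meas_le_set; apply: meas_coord.
    by apply/seteqP; split => y /=; [apply | move=> ? ?].
  rewrite (_ : [set y | _] = setT) //.
  by apply/seteqP; split => y //= _; rewrite ltnNge hj.
by apply/seteqP; split => y /=; [move=> H j _; apply: H | move=> H j; apply: H].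
Qed.

Lemma meas_rho alpha N k : measurable_fun setT (rho R alpha N k).
Proof.
rewrite /rho; apply: measurable_fun_ifT.
- apply: (measurable_fun_bool true); rewrite setTI.
  rewrite (_ : _ @^-1` _ = [set y : (k.-1).-tuple R |
     forall j, (j < k)%N -> Defs.coord R k N%:R y j <= Defs.coord R k N%:R y j.+1]).
    exact: meas_ordset.
  by apply/seteqP; split => y /=; [move/asboolP | move=> H; apply/asboolP].
- apply: measurable_prod => i _.
  apply: (measurableT_comp (measurable_powR _)).
  by apply: measurable_funB; apply: meas_coord.
- exact: measurable_cst.
Qed.

Lemma rho_ge0 alpha N k y : 0 <= rho R alpha N k y.
Proof.
rewrite /rho; case: ifP => // _.
by apply: prodr_ge0 => i _; apply: powR_ge0.
Qed.

Lemma embedNN N (y : (N.-1).-tuple R) : embed R N N y = y.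
Proof.
by apply: eq_from_tnth => i; rewrite tnth_mktuple ltn_ord (tnth_nth 0).
Qed.

End helpers.

Lemma indic_split {R : realType} {T} (X Y : set T) y :
  (\1_X y : R) = \1_(X `&` Y) y + \1_(X `\` Y) y.
Proof.
rewrite !indicE; case: (pselect (X y)) => Xy; case: (pselect (Y y)) => Yy.
- rewrite (mem_set Xy) (mem_set (conj Xy Yy : (X `&` Y) y)).
  by rewrite (memNset (_ : ~ (X `\` Y) y)) ?addr0 // => -[].
- rewrite (mem_set Xy) (mem_set (conj Xy Yy : (X `\` Y) y)).
  by rewrite (memNset (_ : ~ (X `&` Y) y)) ?add0r // => -[].
- by rewrite !memNset ?addr0 // => -[].
- by rewrite !memNset ?addr0 // => -[].
Qed.

Lemma set_split {T} (X Y : set T) : X = (X `&` Y) `|` (X `\` Y).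
Proof.
apply/seteqP; split => x /=.
  by move=> Xx; case: (pselect (Y x)) => Yx; [left|right].
by case=> -[].
Qed.

Lemma set_split0 {T} (X Y : set T) : (X `&` Y) `&` (X `\` Y) = set0.
Proof. by apply/seteqP; split => x //= [[_ ?] [_ ?]]. Qed.

Theorem lemma6p1 (R : realType) (alpha : R) (N : nat)
  (mu nu : probability (pt R N) R) :
  0 < alpha -> (2 <= N)%N ->
  mu (~` OmegaN R N) = 0%E -> nu (~` OmegaN R N) = 0%E ->
  inS R alpha N mu -> stoch_le R N mu nu ->
  (tv R N mu (piN R alpha N) <= tv R N nu (piN R alpha N))%E.
Proof.
case: N mu nu => [|[|N']] mu nu alpha0 N2 //.
move=> muO nuO [gam [mk [gam0 gam1 mkS muE]]] sle.
pose iN : 'I_N'.+2 := ord_max.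
have [g [mg g0 ginc gE]] := mkS iN.
pose ga := gam iN.
have ga0 : 0 <= ga by exact: gam0.
move EZ : (Zk R alpha N'.+2 N'.+2) => Z.
move Ec : ((fine Z)^-1) => c.
pose rh := rho R alpha N'.+2 N'.+2.
pose I := fun X : set (pt R N'.+2) => iint R N'.+1 (fun y => (rh y * \1_X y)%:E).
pose J := fun X : set (pt R N'.+2) => iint R N'.+1 (fun y => (rh y * (g y * \1_X y))%:E).
have hp : forall X, piN R alpha N'.+2 X = (c%:E * I X)%E.
  move=> X; rewrite /piN /pik /piInt EZ Ec; congr (_ * _)%E.
  by congr (iint _ _ _); apply/funext => y; rewrite embedNN -EFinM.
have hmk : forall X, measurable X -> mk iN X = (c%:E * J X)%E.
  move=> X mX; rewrite gE // /piInt EZ Ec; congr (_ * _)%E.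
  by congr (iint _ _ _); apply/funext => y; rewrite embedNN -!EFinM.
have mI : forall X, measurable X -> measurable_fun setT (fun y : pt R N'.+2 => (rh y * \1_X y)%:E).
  move=> X mX; apply/measurable_EFinP; apply: measurable_funM; first exact: meas_rho.
  exact: measurable_indic.
have ind01 : forall (X : set (pt R N'.+2)) y, 0 <= (\1_X y : R) <= 1.
  by move=> X y; rewrite indicE; case: (y \in X); rewrite /= ?lexx ?ler01.
have I0 : forall X, (0 <= rh X * 0)%R by move=> *; rewrite mulr0.
have Ige0 : forall X y, 0 <= rh y * \1_X y.
  move=> X y; apply: mulr_ge0; first exact: rho_ge0.
  by case/andP: (ind01 X y).
have ZI : Z = I setT.
  by rewrite -EZ /I /Zk; congr (iint _ _ _); apply/funext => y; rewrite indicT /= mulr1.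
have IZ : forall X, measurable X -> (0 <= I X /\ I X <= Z)%E.
  move=> X mX; split; first by apply: iint_ge0 => y; rewrite lee_fin.
  rewrite ZI; apply: iint_le.
  - exact: mI.
  - exact: mI.
  - by move=> y; rewrite lee_fin.
  - move=> y; rewrite lee_fin indicT /= mulr1.
    have := rho_ge0 alpha N'.+2 N'.+2 y; have := ind01 X y.
    by rewrite /rh; case/andP => ? ?; nra.
have Z0 : (0 <= Z)%E by rewrite ZI; apply: (proj1 (IZ _ measurableT)).
have pfin : forall X, measurable X ->
    piN R alpha N'.+2 X \is a fin_num /\ (0 <= piN R alpha N'.+2 X)%E.
  move=> X mX; rewrite hp; have [IX0 IXZ] := IZ X mX.
  rewrite -Ec; destruct Z as [r| |] => //.
  - have IXf : I X \is a fin_num.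
      by rewrite ge0_fin_numE //; apply: le_lt_trans IXZ (ltry _).
    split; first by rewrite fin_numM.
    by apply: mule_ge0 => //; rewrite lee_fin invr_ge0 fine_ge0.
  - by rewrite /= invr0 mul0e.
pose q := fun X => fine (piN R alpha N'.+2 X).
have qE : forall X, measurable X -> piN R alpha N'.+2 X = (q X)%:E.
  by move=> X mX; rewrite /q fineK //; case: (pfin X mX).
have q0 : forall X, measurable X -> 0 <= q X.
  by move=> X mX; rewrite -lee_fin -qE //; case: (pfin X mX).
have qT : q setT <= 1.
  rewrite -lee_fin -qE // hp -ZI -Ec.
  destruct Z as [r| |] => //=.
    have [->|r0] := eqVneq r 0; first by rewrite /= invr0 mul0e lee_fin.
    by rewrite -EFinM mulVf.
  by rewrite invr0 mul0e.
have qU : forall X Y, measurable X -> measurable Y -> q X = q (X `&` Y) + q (X `\` Y).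
  move=> X Y mX mY.
  have mXY := measurableI _ _ mX mY; have mXnY := measurableD mX mY.
  apply: EFin_inj; rewrite EFinD -!qE // !hp -muleDr //.
  congr (_ * _)%E; rewrite -iintD //; try exact: mI.
  - congr (iint _ _ _); apply/funext => y.
    rewrite -EFinD -mulrDr; congr ((_ * _)%:E).
    exact: indic_split.
  - by move=> y; rewrite lee_fin.
  - by move=> y; rewrite lee_fin.
  - by rewrite ge0_adde_def //= inE; apply: iint_ge0 => y; rewrite lee_fin.
pose m := fun X => fine (mu X).
have muF : forall X, measurable X -> mu X = (m X)%:E.
  by move=> X mX; rewrite /m fineK // fin_num_measure.
have m0 : forall X, measurable X -> 0 <= m X.
  by move=> X mX; rewrite -lee_fin -muF.
have mU : forall X Y, measurable X -> measurable Y -> m X = m (X `&` Y) + m (X `\` Y).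
  move=> X Y mX mY.
  have mXY := measurableI _ _ mX mY; have mXnY := measurableD mX mY.
  apply: EFin_inj; rewrite EFinD -!muF // -measureU //; last exact: set_split0.
  by rewrite -set_split.
have mT : m setT = 1 by rewrite /m probability_setT.
pose S := [set x : pt R N'.+2 | tnth x ord_max = (N'.+2)%:R].
have mS : measurable S.
  have := @measurable_tnth _ R N'.+1 ord_max measurableT [set (N'.+2)%:R] (measurable_set1 _).
  by rewrite setTI.
have mO : measurable (OmegaN R N'.+2) by exact: meas_ordset.
pose G := [set x : pt R N'.+2 | 1 < ga * g x].
have mG : measurable G.
  have := measurable_funM (measurable_cst ga) mg measurableT (measurable_itv `]1, +oo[).
  rewrite setTI; congr measurable; apply/seteqP; split => x /=;
    by rewrite in_itv /= andbT.
pose A := OmegaN R N'.+2 `&` (S `|` G).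
have mA : measurable A by apply: measurableI => //; apply: measurableU.
have P3 : forall X, measurable X -> X `<=` S -> q X = 0.
  move=> X mX XS; apply: EFin_inj; rewrite -qE // hp.
  rewrite (_ : I X = 0%E) ?mule0 //.
  apply: (@iint_last0 R N' (N'.+2)%:R) => y hy.
  rewrite indicE memNset ?mulr0 // => /XS hy'.
  by rewrite /S /= in hy'; rewrite hy' eqxx in hy.
have P5a : forall X, measurable X -> ga * fine (mk iN X) <= m X.
  move=> X mX; rewrite -lee_fin -muF // muE // (bigD1 iN) //=.
  rewrite EFinM fineK ?fin_num_measure //.
  apply: leeDl; apply: sume_ge0 => i _; apply: mule_ge0; [by rewrite lee_fin| exact: measure_ge0].
have P5b : forall X, measurable X -> X `&` S = set0 -> m X = ga * fine (mk iN X).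
  move=> X mX XS; apply: EFin_inj; rewrite -muF // muE // (bigD1 iN) //= EFinM fineK ?fin_num_measure //.
  rewrite big1 ?adde0 // => i hi.
  have [gi [_ _ _ giE]] := mkS i.
  rewrite giE // /piInt iint0 ?mule0 // => y.
  rewrite (_ : (\1_X (embed R N'.+2 i.+1 y) : R) = 0) ?mulr0 ?mule0 //.
  rewrite indicE memNset // => Xe.
  have : (X `&` S) (embed R N'.+2 i.+1 y); last by rewrite XS.
  split => //; rewrite /S /= tnth_mktuple.
  have h1 : (i < N'.+1)%N.
    rewrite ltn_neqAle -ltnS ltn_ord andbT.
    by apply: contra hi => /eqP h; apply/eqP/val_inj.
  by rewrite ifF //; apply/negbTE; rewrite -leqNgt; exact: h1.
have c0 : 0 <= c by rewrite -Ec invr_ge0 fine_ge0.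
have mJ' : forall X, measurable X -> measurable_fun setT (fun y : pt R N'.+2 => (ga * (rh y * (g y * \1_X y)))%:E).
  move=> X mX; apply/measurable_EFinP; apply: measurable_funM; first exact: measurable_cst.
  apply: measurable_funM; first exact: meas_rho.
  by apply: measurable_funM => //; exact: measurable_indic.
have J0 : forall X y, 0 <= rh y * (g y * \1_X y).
  move=> X y; apply: mulr_ge0; first exact: rho_ge0.
  by apply: mulr_ge0 => //; case/andP: (ind01 X y).
have hJ : forall X, measurable X -> (ga%:E * mk iN X)%E =
    (c%:E * iint R N'.+1 (fun y => (ga * (rh y * (g y * \1_X y)))%:E))%E.
  move=> X mX; rewrite hmk // muleCA; congr (_ * _)%E.
  rewrite /J -iintZ //.
  - apply/measurable_EFinP; exact: (measurable_funM (meas_rho _ _ _) (measurable_funM mg (measurable_indic mX))).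
  - by move=> y; rewrite lee_fin.
have P4a : forall X, measurable X -> (forall x, X x -> ga * g x <= 1) ->
    ga * fine (mk iN X) <= q X.
  move=> X mX H; rewrite -lee_fin EFinM (fineK (fin_num_measure (mk iN) X mX)) hJ // -qE // hp.
  apply: lee_wpmul2l; first by rewrite lee_fin.
  apply: iint_le; [exact: mJ'|exact: mI| |].
  - by move=> y; rewrite lee_fin; apply: mulr_ge0.
  - move=> y; rewrite lee_fin indicE; case: (pselect (X y)) => Xy.
      rewrite mem_set //= ?mulr1n !mulr1.
      have := H y Xy; have := rho_ge0 alpha N'.+2 N'.+2 y; rewrite /rh => ? ?; nra.
    by rewrite memNset //= !mulr0.
have P4b : forall X, measurable X -> (forall x, X x -> 1 <= ga * g x) ->
    q X <= ga * fine (mk iN X).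
  move=> X mX H; rewrite -lee_fin EFinM (fineK (fin_num_measure (mk iN) X mX)) hJ // -qE // hp.
  apply: lee_wpmul2l; first by rewrite lee_fin.
  apply: iint_le; [exact: mI|exact: mJ'| |].
  - by move=> y; rewrite lee_fin.
  - move=> y; rewrite lee_fin indicE; case: (pselect (X y)) => Xy.
      rewrite mem_set //= ?mulr1n !mulr1.
      have := H y Xy; have := rho_ge0 alpha N'.+2 N'.+2 y; rewrite /rh => ? ?; nra.
    by rewrite memNset //= !mulr0.
have F1 : forall X, measurable X -> (forall x, X x -> ~ A x) -> m X <= q X.
  move=> X mX XA.
  have mXO := measurableI _ _ mX mO; have mXnO := measurableD mX mO.
  rewrite (mU X _ mX mO) (qU X _ mX mO).
  have -> : m (X `\` OmegaN R N'.+2) = 0.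
    rewrite /m (_ : mu _ = 0%E) //.
    apply/eqP; rewrite eq_le measure_ge0 andbT -muO.
    apply: le_measure; rewrite ?inE //; try exact: measurableC; try exact: measurableD; by move=> x [_].
  rewrite (P5b _ mXO); last first.
    apply/seteqP; split => x // [[Xx Ox] Sx]; apply: (XA x Xx); by split => //; left.
  have h1 := q0 _ mXnO.
  have h2 := P4a _ mXO.
  have : ga * fine (mk iN (X `&` OmegaN R N'.+2)) <= q (X `&` OmegaN R N'.+2).
    apply: h2 => z [Xz Oz]; rewrite leNgt; apply/negP => h; apply: (XA z Xz).
    by split => //; right.
  lra.
have F2 : forall X, measurable X -> X `<=` A -> q X <= m X.
  move=> X mX XA.
  have mXS := measurableI _ _ mX mS; have mXnS := measurableD mX mS.
  rewrite (qU X _ mX mS) (mU X _ mX mS) (P3 _ mXS); last by move=> x [].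
  have h1 : q (X `\` S) <= ga * fine (mk iN (X `\` S)).
    apply: P4b => // x [Xx nS]; have [_ [//|Gx]] := XA x Xx; exact: ltW.
  have h2 := P5a _ mXnS. have h3 := m0 _ mXS. lra.
have hinc : increasing_on R N'.+2 (OmegaN R N'.+2) (\1_A).
  move=> x y Ox Oy xy; rewrite !indicE.
  case: (pselect (A x)) => Ax; last first.
    by rewrite (memNset Ax) /=; case: (_ \in _) => /=; rewrite ?ler01 ?lexx.
  have Ay : A y.
    split => //; case: Ax => _ [Sx|Gx]; [left|right].
    - rewrite /S /=; apply/eqP; rewrite eq_le; apply/andP; split.
        have := Oy N'.+1 (ltnSn _); rewrite /Defs.coord /= ltnn leqnn /=.
        by rewrite (tnth_nth 0).
      by rewrite -Sx; exact: xy.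
    - rewrite /G /=; apply: lt_le_trans Gx _; apply: ler_wpM2l => //; apply: ginc => //.
        by split => //; rewrite /Defs.coord /= leqnn.
      by split => //; rewrite /Defs.coord /= leqnn.
  by rewrite (mem_set Ax) (mem_set Ay).
have mind : measurable_fun setT (\1_A : pt R N'.+2 -> R) by exact: measurable_indic.
have := sle _ mind hinc.
rewrite !integral_indic // !setIidl; try by move=> x [].
move=> muAnuA.
have key : forall B, measurable B -> `|m B - q B| <= m A - q A.
  move=> B mB.
  have mBA := measurableI _ _ mB mA; have mBnA := measurableD mB mA.
  have mAnB := measurableD mA mB; have mCA := measurableC mA.
  have mCAnB := measurableD mCA mB.
  have e1 := mU B A mB mA. have e2 := qU B A mB mA.
  have e3 := mU A B mA mB. have e4 := qU A B mA mB.
  have e5 := mU _ A measurableT mA. have e6 := qU _ A measurableT mA.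
  rewrite setTI setTD in e5 e6.
  have e7 := mU _ B mCA mB. have e8 := qU _ B mCA mB.
  have eBA : ~` A `&` B = B `\` A by rewrite setDE setIC.
  have eAB : A `&` B = B `&` A by rewrite setIC.
  rewrite eBA in e7 e8; rewrite eAB in e3 e4.
  have f1 := F1 _ mBnA (fun x h => proj2 h).
  have f2 := F2 _ mAnB (fun x h => proj1 h).
  have f3 := F2 _ mBA (fun x h => proj2 h).
  have f4 := F1 _ mCAnB (fun x h => proj1 h).
  have g1 := m0 _ mBA.
  rewrite ler_norml; apply/andP; split; lra.
have nuF : forall X, measurable X -> nu X = (fine (nu X))%:E.
  by move=> X mX; rewrite fineK // fin_num_measure.
have mAnA : m A <= fine (nu A) by rewrite -lee_fin -muF // -nuF.
apply: (@le_trans _ _ ((m A - q A)%:E)).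
  apply: ge_ereal_sup => z [B mB <-]; rewrite muF // qE // -EFinB /= lee_fin; exact: key.
apply: (@le_trans _ _ (`|nu A - piN R alpha N'.+2 A|)%E); last first.
  by apply: ereal_sup_ubound; exists A.
rewrite nuF // qE // -EFinB /= lee_fin; apply: le_trans (ler_norm _); lra.
Qed.
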